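(* Let $N\ge 1$ and $n\ge 2N+2$ be integers, let $x\in\{0,1\}^N$ and $k^\star\in[N]$. Let $G$ be the graph on vertex set $P\cup U\cup W$ with $P=\{v_1,\dots,v_{n-2N}\}$, $U=\{u_1,\dots,u_N\}$, $W=\{w_1,\dots,w_N\}$ (so $n$ vertices), whose edges are: $v_iv_{i+1}$ for $1\le i<n-2N$; $u_iw_i$ for all $i\in[N]$; $v_1u_i$ for every $i$ with $x_i=1$; $v_1w_i$ for every $i\neq k^\star$; and $w_{k^\star}v_{n-2N}$. If $x_{k^\star}=1$ then the graphic TSP cost of $G$ is at most $n+2N$; if $x_{k^\star}=0$ then the graphic TSP cost of $G$ is at least $2n-N-1$.
   Context: For a connected unweighted undirected graph $G=(V,E)$ with $n\ge 2$ vertices, the graphic TSP cost is $\min \sum_{i=1}^{n} d_G(v_i,v_{i+1})$ over cyclic orderings $(v_1,\dots,v_n)$ of $V$ ($v_{n+1}=v_1$), where $d_G$ is shortest-path distance. *)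

(* Defs.v *)
From mathcomp Require Import all_boot all_fingroup.
Set Implicit Arguments. Unset Strict Implicit. Unset Printing Implicit Defensive.

(* A graph is an edge relation e : rel T on a finType T
   (assumed symmetric where relevant). *)

Section Graphic.
Variable T : finType.
Variable e : rel T.

Definition walkb (k : nat) (x y : T) : bool :=
  [exists p : k.-tuple T, path e x p && (last x p == y)].

(* shortest-path distance: least k such that a walk of length k exists
   (searched among 0..#|T|-1, which suffices for connected graphs;
   returns #|T| if y is unreachable from x). *)
Definition gdist (x y : T) : nat :=
  find (fun k => walkb k x y) (iota 0 #|T|).

Definition tour_cost (s : seq T) : nat :=
  if s is x :: s' then sumn (pairmap gdist x (rcons s' x)) else 0.

Definition perm_tour (p : {perm T}) : seq T := [seq p v | v <- enum T].

Definition tsp_cost : nat :=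
  tour_cost (perm_tour [arg min_(p < (1 : {perm T})%g) tour_cost (perm_tour p)]).

End Graphic.

(* The gadget graph. Vertices: inl i = v_{i+1} (i < M, M = n - 2N),
   inr (inl i) = u_{i+1}, inr (inr i) = w_{i+1} (i < N). *)
Definition gadget_V (M N : nat) : finType := ('I_M + ('I_N + 'I_N))%type.

Definition gadget_arc (M N : nat) (x : 'I_N -> bool) (ks : 'I_N)
  (a b : gadget_V M N) : bool :=
  match a, b with
  | inl i, inl j => i.+1 == j
  | inr (inl i), inr (inr j) => i == j
  | inl i, inr (inl j) => (i == 0 :> nat) && x j
  | inl i, inr (inr j) => (i == 0 :> nat) && (j != ks)
  | inr (inr j), inl i => (j == ks) && (i == M.-1 :> nat)
  | _, _ => false
  end.

Definition gadget_edge (M N : nat) (x : 'I_N -> bool) (ks : 'I_N) :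
  rel (gadget_V M N) :=
  fun a b => gadget_arc x ks a b || gadget_arc x ks b a.

(* Main.v *)
Require Import Defs.
From mathcomp Require Import all_boot all_fingroup.
From mathcomp Require Import zify.
Set Implicit Arguments. Unset Strict Implicit. Unset Printing Implicit Defensive.

Definition dn (a b : nat) := (a - b) + (b - a).

Section Gen.
Variable T : eqType.
Definition Sm (F : T -> T -> nat) x s := sumn (pairmap F x s).

Lemma Sm_cat F x s1 s2 : Sm F x (s1 ++ s2) = Sm F x s1 + Sm F (last x s1) s2.
Proof. by rewrite /Sm pairmap_cat sumn_cat. Qed.

Lemma Sm_le F G x s : (forall a b, F a b <= G a b) -> Sm F x s <= Sm G x s.
Proof. move=> H; elim: s x => [|y s IH] x //=; apply: leq_add; [exact: H | exact: IH]. Qed.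

Lemma Sm_le_path F G x s : path (fun a b => F a b <= G a b) x s -> Sm F x s <= Sm G x s.
Proof. elim: s x => [|y s IH] x //=; case/andP=> h1 h2; apply: leq_add => //; exact: IH. Qed.

Lemma Sm_add F G x s : Sm (fun a b => F a b + G a b) x s = Sm F x s + Sm G x s.
Proof. elim: s x => [|y s IH] x //=; rewrite /Sm /= in IH *; rewrite IH; lia. Qed.

Lemma Sm_mul k F x s : Sm (fun a b => k * F a b) x s = k * Sm F x s.
Proof. elim: s x => [|y s IH] x /=; first by rewrite /Sm /= muln0.
rewrite /Sm /= in IH *; rewrite IH; lia. Qed.

Lemma Sm_sum (I : Type) (r : seq I) (P : pred I) (G : I -> T -> T -> nat) x s :
  Sm (fun a b => \sum_(i <- r | P i) G i a b) x s = \sum_(i <- r | P i) Sm (G i) x s.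
Proof.
elim: s x => [|y s IH] x /=; first by rewrite /Sm /= big1.
rewrite /Sm /= in IH *; rewrite IH big_split //.
Qed.

Variable g : T -> nat.
Let Fg := fun a b => dn (g a) (g b).

Lemma Sm_path_ge x s : dn (g x) (g (last x s)) <= Sm Fg x s.
Proof.
elim: s x => [|y s IH] x /=; first by rewrite /dn; lia.
rewrite /Sm /= in IH *; have := IH y; rewrite /Fg /dn; lia.
Qed.

Lemma Sm_mid x s u : u \in x :: s -> dn (g x) (g u) + dn (g u) (g (last x s)) <= Sm Fg x s.
Proof.
rewrite inE => /orP[/eqP->|]; first by have := Sm_path_ge x s; rewrite /dn; lia.
case/path.splitP => p1 p2; rewrite Sm_cat last_cat last_rcons.
have h1 := Sm_path_ge x (rcons p1 u); have h2 := Sm_path_ge u p2.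
rewrite last_rcons in h1; exact: leq_add.
Qed.

Lemma Sm_two x s1 s2 u v : u \in x :: s1 -> v \in last x s1 :: s2 ->
  dn (g x) (g u) + dn (g u) (g v) + dn (g v) (g (last x (s1 ++ s2))) <= Sm Fg x (s1 ++ s2).
Proof.
move=> hu hv; rewrite Sm_cat last_cat.
have h1 := Sm_mid hu; have h2 := Sm_mid hv.
move: h1 h2; rewrite /dn; lia.
Qed.

Lemma Sm_cycle x s a b : a \in x :: s -> b \in x :: s -> last x s = x ->
  2 * dn (g a) (g b) <= Sm Fg x s.
Proof.
case/splitPl => s1 s2 ha hb hl.
move: hb; rewrite -cat_cons mem_cat => /orP[hb|hb].
  have := Sm_two hb (v := a) (s2 := s2); rewrite hl ha mem_head => /(_ isT).
  rewrite /dn; lia.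
have hb' : b \in last x s1 :: s2 by rewrite inE hb orbT.
have := Sm_two (u := a) (x := x) (s1 := s1) (s2 := s2) _ hb'.
rewrite hl -ha mem_last => /(_ isT); rewrite /dn; lia.
Qed.
End Gen.

Section Dist.
Variables (T : finType) (e : rel T).

Lemma gdist_le k a b : walkb e k a b -> k < #|T| -> gdist e a b <= k.
Proof.
move=> w lt; rewrite /gdist leqNgt; apply/negP => H.
by have := before_find 0 H; rewrite nth_iota // add0n w.
Qed.

Lemma gdist_walk a b : gdist e a b < #|T| -> walkb e (gdist e a b) a b.
Proof.
move=> h; have hs : has (fun k => walkb e k a b) (iota 0 #|T|) by rewrite has_find size_iota.
by have := nth_find 0 hs; rewrite nth_iota // add0n.
Qed.

Lemma gdist_size a b : gdist e a b <= #|T|.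
Proof. by have := find_size (fun k => walkb e k a b) (iota 0 #|T|); rewrite size_iota. Qed.

Lemma walk_lip (Phi : T -> T -> nat) c :
  (forall a, Phi a a = 0) ->
  (forall a b d, Phi a d <= Phi a b + Phi b d) -> (forall a b, e a b -> Phi a b <= c) ->
  forall k a b, walkb e k a b -> Phi a b <= c * k.
Proof.
move=> h0 htri hed k a b /existsP[p /andP[hp /eqP <-]].
have hk : size p = k by rewrite size_tuple.
move: (val p) hk hp => q <-; elim: q a => [|y s IH] a /=.
  by rewrite h0.
case/andP=> hy hs; apply: leq_trans (htri _ y _) _.
rewrite mulnS; apply: leq_add; [exact: hed | exact: IH].
Qed.
End Dist.

Lemma dnn a : dn a a = 0.
Proof. rewrite /dn; lia. Qed.
Lemma dnC a b : dn a b = dn b a.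
Proof. rewrite /dn; lia. Qed.
Lemma dn_tri a b c : dn a c <= dn a b + dn b c.
Proof. rewrite /dn; lia. Qed.
Lemma dn_bool (a b : bool) : dn a b <= 1.
Proof. by case: a; case: b. Qed.

Lemma exists_perm_tour (T : finType) (s : seq T) : perm_eq s (enum T) ->
  exists p : {perm T}, perm_tour p = s.
Proof.
move=> hp; have hsz : size s = size (enum T) := perm_size hp.
have hu : uniq s by rewrite (perm_uniq hp) enum_uniq.
pose f := fun v : T => nth v s (index v (enum T)).
have hidx : forall v : T, index v (enum T) < size s.
  by move=> v; rewrite hsz index_mem mem_enum.
have finj : injective f.
  move=> u v; rewrite /f (set_nth_default u v (hidx v)) => /eqP.
  rewrite nth_uniq // => /eqP h.
  by apply: (index_inj u) h; rewrite mem_enum.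
exists (perm finj); rewrite /perm_tour.
case Hs: s => [|x0 s'].
  by move: hsz; rewrite Hs; case: (enum T) => [|? ?].
rewrite -Hs.
apply: (@eq_from_nth _ x0); first by rewrite size_map hsz.
move=> i; rewrite size_map => hi.
rewrite (nth_map x0) // permE /f.
rewrite index_uniq ?enum_uniq //; apply: set_nth_default; by rewrite hsz.
Qed.


Section Gadget.
Variables (m N : nat) (x : 'I_N -> bool) (ks : 'I_N).
Notation V := (gadget_V m.+2 N).
Notation e := (gadget_edge (M := m.+2) x ks).
Definition v0 : V := inl ord0.
Definition Uv (j : 'I_N) : V := inr (inl j).
Definition Wv (j : 'I_N) : V := inr (inr j).

Definition fpot (v : V) : nat := match v with
  | inl i => i
  | inr (inl j) => if j == ks then m.+3 else 0
  | inr (inr j) => if j == ks then m.+2 else 0 end.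

Definition hc (i : 'I_N) (a b : V) : nat :=
  dn (a == Uv i) (b == Uv i) + dn (a == Wv i) (b == Wv i)
  + dn ((a == Uv i) || (a == Wv i)) ((b == Uv i) || (b == Wv i)).

Definition cs (a b : V) := \sum_(i < N | i != ks) hc i a b.
Definition Phi (a b : V) := 2 * dn (fpot a) (fpot b) + cs a b.

Lemma card_V : #|V| = m.+2 + (N + N).
Proof. by rewrite !card_sum !card_ord. Qed.

Lemma Phi0 a : Phi a a = 0.
Proof. rewrite /Phi /cs big1 => [|i _]; first by rewrite dnn. by rewrite /hc !dnn. Qed.

Lemma PhiC a b : Phi a b = Phi b a.
Proof.
rewrite /Phi /cs; congr (_ + _); first by rewrite dnC.
apply: eq_bigr => i _; rewrite /hc; congr (_ + _ + _); apply: dnC.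
Qed.

Lemma Phi_tri a b c : Phi a c <= Phi a b + Phi b c.
Proof.
rewrite /Phi /cs addnACA; apply: leq_add.
  by rewrite -mulnDr leq_mul2l dn_tri orbT.
rewrite -big_split /=; apply: leq_sum => i _; rewrite /hc.
set d1 := dn _ _; set d2 := dn _ _; set d3 := dn _ _.
set d4 := dn _ _; set d5 := dn _ _; set d6 := dn _ _.
set d7 := dn _ _; set d8 := dn _ _; set d9 := dn _ _.
have := @dn_tri (a == Uv i) (b == Uv i) (c == Uv i).
have := @dn_tri (a == Wv i) (b == Wv i) (c == Wv i).
have := @dn_tri ((a == Uv i) || (a == Wv i)) ((b == Uv i) || (b == Wv i)) ((c == Uv i) || (c == Wv i)).
rewrite -/d1 -/d2 -/d3 -/d4 -/d5 -/d6 -/d7 -/d8 -/d9.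
move: d1 d2 d3 d4 d5 d6 d7 d8 d9 => *; lia.
Qed.
Lemma cs_zero a b : (forall i, i != ks -> hc i a b = 0) -> cs a b = 0.
Proof. by move=> H; rewrite /cs big1. Qed.

Lemma cs_one a b j : j != ks -> (forall i, i != ks -> i != j -> hc i a b = 0) ->
  cs a b = hc j a b.
Proof.
move=> hj H; rewrite /cs (bigD1 j) //= big1 ?addn0 // => i /andP[h1 h2]; exact: H.
Qed.

Lemma eUU (i j : 'I_N) : ((inr (inl i) : V) == inr (inl j)) = (i == j).
Proof. by apply/eqP/eqP => [[]|->]. Qed.
Lemma eWW (i j : 'I_N) : ((inr (inr i) : V) == inr (inr j)) = (i == j).
Proof. by apply/eqP/eqP => [[]|->]. Qed.
Lemma eUW (i j : 'I_N) : ((inr (inl i) : V) == inr (inr j)) = false.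
Proof. by apply/eqP. Qed.
Lemma eWU (i j : 'I_N) : ((inr (inr i) : V) == inr (inl j)) = false.
Proof. by apply/eqP. Qed.
Lemma eLU k (j : 'I_N) : ((inl k : V) == inr (inl j)) = false.
Proof. by apply/eqP. Qed.
Lemma eLW k (j : 'I_N) : ((inl k : V) == inr (inr j)) = false.
Proof. by apply/eqP. Qed.
Definition eVs := (eUU, eWW, eUW, eWU, eLU, eLW).

Ltac hcz h := let h' := fresh in have h' := h; rewrite eq_sym in h';
  rewrite /hc /Uv /Wv /= ?eVs ?(negbTE h) ?(negbTE h').

Lemma Phi_arc a b : ~~ x ks -> gadget_arc x ks a b -> Phi a b <= 2.
Proof.
move=> hx; case: a => [i|[i|i]]; case: b => [j|[j|j]] //=.
- move=> /eqP hij; rewrite /Phi cs_zero /=; first by rewrite -hij /dn; lia.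
  by move=> i' _; rewrite /hc /Uv /Wv /= ?eVs.
- case/andP=> /eqP i0 hxj.
  have hj : j != ks by apply: contraNneq hx => <-.
  rewrite /Phi (cs_one hj) /=; last by move=> i' _ h; hcz h.
  by rewrite (negbTE hj) i0 /hc /Uv /Wv /= ?eVs !eqxx.
- case/andP=> /eqP i0 hj.
  rewrite /Phi (cs_one hj) /=; last by move=> i' _ h; hcz h.
  by rewrite (negbTE hj) i0 /hc /Uv /Wv /= ?eVs !eqxx.
- move=> /eqP <-; case: (eqVneq i ks) => [->|hi].
    rewrite /Phi cs_zero /= ?eqxx; first by rewrite /dn; lia.
    by move=> i' h; hcz h.
  rewrite /Phi (cs_one hi) /=; last by move=> i' _ h; hcz h.
  by rewrite (negbTE hi) /hc /Uv /Wv /= ?eVs !eqxx.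
- case/andP=> /eqP -> /eqP hj; rewrite /Phi cs_zero /= ?eqxx ?hj; first by rewrite /dn; lia.
  by move=> i' h; hcz h.
Qed.
Lemma Phi_edge a b : ~~ x ks -> e a b -> Phi a b <= 2.
Proof.
move=> hx /orP[h|h]; first exact: Phi_arc.
rewrite PhiC; exact: Phi_arc.
Qed.

Lemma fpot_le a : fpot a <= m.+3.
Proof.
case: a => [i|[i|i]] /=; first by have := ltn_ord i; lia.
  by case: ifP.
by case: ifP.
Qed.

Lemma Phi_bound a b : Phi a b <= 2 * #|V|.
Proof.
rewrite card_V /Phi.
have h1 : dn (fpot a) (fpot b) <= m.+3.
  by have := fpot_le a; have := fpot_le b; rewrite /dn; lia.
have h2 : cs a b <= #|predC1 ks| * 3.
  rewrite -sum_nat_const /cs; apply: leq_sum => i _.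
  rewrite /hc; have := dn_bool (a == Uv i) (b == Uv i); have := dn_bool (a == Wv i) (b == Wv i).
  have := dn_bool ((a == Uv i) || (a == Wv i)) ((b == Uv i) || (b == Wv i)).
  move: (dn _ _) (dn _ _) (dn _ _) => *; lia.
have := ltn_ord ks; move: h2; rewrite cardC1 card_ord; move: (cs a b) h1 => *; lia.
Qed.

Lemma Phi_gdist a b : ~~ x ks -> Phi a b <= 2 * gdist e a b.
Proof.
move=> hx; have := gdist_size e a b; rewrite leq_eqVlt => /orP[/eqP ->|h].
  exact: Phi_bound.
apply: (walk_lip (e := e)) (gdist_walk h).
- exact: Phi0.
- exact: Phi_tri.
- by move=> a' b'; apply: Phi_edge.
Qed.


Lemma lower (p : {perm V}) : ~~ x ks -> 2 * m.+2 + 3 * N - 1 <= tour_cost e (perm_tour p).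
Proof.
move=> hx.
have hin : forall v, v \in perm_tour p.
  move=> v; apply/mapP; exists (p^-1 v)%g; first by rewrite mem_enum.
  by rewrite permKV.
case ht: (perm_tour p) => [|y s]; first by have := hin v0; rewrite ht.
rewrite /tour_cost.
have -> : sumn (pairmap (gdist e) y (rcons s y)) = Sm (gdist e) y (rcons s y) by [].
set r := rcons s y.
have hc : Sm Phi y r <= 2 * Sm (gdist e) y r.
  rewrite -Sm_mul; apply: Sm_le => a b; exact: Phi_gdist.
have hmem : forall v, v \in y :: s by move=> v; rewrite -ht hin.
have hl : last y r = y by rewrite /r last_rcons.
have hmem' : forall v, v \in y :: r by move=> v; rewrite inE /r mem_rcons hmem orbT.
have E : Sm Phi y r = 2 * Sm (fun a b => dn (fpot a) (fpot b)) y r +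
   \sum_(i < N | i != ks) (Sm (fun a b => dn (a == Uv i) (b == Uv i)) y r
      + Sm (fun a b => dn (a == Wv i) (b == Wv i)) y r
      + Sm (fun a b => dn ((a == Uv i) || (a == Wv i)) ((b == Uv i) || (b == Wv i))) y r).
  rewrite /Phi Sm_add Sm_mul /cs Sm_sum; congr (_ + _); apply: eq_bigr => i _.
  by rewrite /hc !Sm_add.
have hf : 2 * m.+3 <= Sm (fun a b => dn (fpot a) (fpot b)) y r.
  have := Sm_cycle fpot (hmem' (Uv ks)) (hmem' v0) hl.
  move=> h; apply: leq_trans h; rewrite /Uv /v0 /= eqxx /dn; lia.
have hcut : \sum_(i < N | i != ks) 6 <= \sum_(i < N | i != ks) (Sm (fun a b => dn (a == Uv i) (b == Uv i)) y r
      + Sm (fun a b => dn (a == Wv i) (b == Wv i)) y r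
      + Sm (fun a b => dn ((a == Uv i) || (a == Wv i)) ((b == Uv i) || (b == Wv i))) y r).
  apply: leq_sum => i _.
  have h1 := Sm_cycle (fun v => nat_of_bool (v == Uv i)) (hmem' (Uv i)) (hmem' v0) hl.
  have h2 := Sm_cycle (fun v => nat_of_bool (v == Wv i)) (hmem' (Wv i)) (hmem' v0) hl.
  have h3 := Sm_cycle (fun v => nat_of_bool ((v == Uv i) || (v == Wv i))) (hmem' (Uv i)) (hmem' v0) hl.
  move: h1 h2 h3; rewrite /= /v0 /Uv /Wv !eqxx ?eVs /= /dn /= => h1 h2 h3.
  rewrite (_ : 6 = 2 + 2 + 2) //; apply: leq_add; first apply: leq_add.
  - exact: h1.
  - exact: h2.
  - exact: h3.
move: hcut; rewrite sum_nat_const cardC1 card_ord => hcut.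
have := ltn_ord ks.
move: hc; rewrite E; move: (Sm (gdist e) y r) (Sm _ y r) (\sum_(i < N | i != ks) _) hf hcut => *; lia.
Qed.

Definition Gw (v : V) : nat := match v with inr (inl _) => 3 | _ => 1 end.

Lemma Sm_first (y : V) s : Sm (fun a (_ : V) => Gw a) y s = sumn (map Gw (belast y s)).
Proof. by elim: s y => [|z s IH] y //=; rewrite -IH. Qed.

Lemma card_gt3 : 3 < #|V|.
Proof. rewrite card_V; have := ltn_ord ks; lia. Qed.

Lemma dedge a b : e a b -> gdist e a b <= 1.
Proof.
move=> h; apply: gdist_le; last by apply: leq_trans card_gt3.
by apply/existsP; exists [tuple b]; rewrite /= h eqxx.
Qed.

Lemma dwalk2 a b c : e a b -> e b c -> gdist e a c <= 3.
Proof.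
move=> h1 h2; apply: (@leq_trans 2); last by [].
apply: gdist_le; last by apply: leq_trans card_gt3.
by apply/existsP; exists [tuple b; c]; rewrite /= h1 h2 eqxx.
Qed.

Lemma dwalk3 a b c d : e a b -> e b c -> e c d -> gdist e a d <= 3.
Proof.
move=> h1 h2 h3; apply: gdist_le; last exact: card_gt3.
by apply/existsP; exists [tuple b; c; d]; rewrite /= h1 h2 h3 eqxx.
Qed.

Lemma e_v0U : x ks -> e v0 (Uv ks).
Proof. by move=> h; rewrite /gadget_edge /= h. Qed.
Lemma e_UW j : e (Uv j) (Wv j).
Proof. by rewrite /gadget_edge /= eqxx. Qed.
Lemma e_Wv0 i : i != ks -> e (Wv i) v0.
Proof. by move=> h; rewrite /gadget_edge /= h ?orbT. Qed.
Lemma e_UW' j : e (Wv j) (Uv j).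
Proof. by rewrite /gadget_edge /= eqxx ?orbT. Qed.
Lemma e_v0W i : i != ks -> e v0 (Wv i).
Proof. by move=> h; rewrite /gadget_edge /= h. Qed.
Lemma e_Uv0 : x ks -> e (Uv ks) v0.
Proof. by move=> h; rewrite /gadget_edge /= h ?orbT. Qed.

Lemma dUW j i : x ks -> i != ks -> gdist e (Uv j) (Wv i) <= 3.
Proof.
move=> hx hi; case: (eqVneq j ks) => [->|hj].
  exact: (dwalk2 (e_Uv0 hx) (e_v0W hi)).
exact: (dwalk3 (e_UW j) (e_Wv0 hj) (e_v0W hi)).
Qed.

Lemma dUv0 j : x ks -> gdist e (Uv j) v0 <= 3.
Proof.
move=> hx; case: (eqVneq j ks) => [->|hj].
  by apply: leq_trans (dedge (e_Uv0 hx)) _.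
exact: (dwalk2 (e_UW j) (e_Wv0 hj)).
Qed.

Definition Rg (a b : V) := gdist e a b <= Gw a.

Definition pl (l : seq 'I_N) : seq V := flatten [seq [:: Wv i; Uv i] | i <- l].

Lemma ppath (l : seq 'I_N) j : x ks -> all (fun i => i != ks) l ->
  path Rg (Uv j) (rcons (pl l) v0).
Proof.
move=> hx; elim: l j => [|i l IH] j /=.
  by rewrite /Rg /= (dUv0 j hx).
case/andP=> hi hl; rewrite /Rg /= (dUW j hx hi).
by rewrite (leq_trans (dedge (e_UW' i))) //= IH.
Qed.

Lemma mem_pl l v : (v \in pl l) = match v with inl _ => false | inr (inl j) => j \in l
  | inr (inr j) => j \in l end.
Proof.
elim: l => [|i l IH] /=; first by case: v => [?|[?|?]].
rewrite /pl /= -/(pl l) !inE {}IH; case: v => [k|[k|k]] //=; rewrite /Uv /Wv ?eVs //.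
Qed.

Lemma pl_uniq l : uniq l -> uniq (pl l).
Proof.
elim: l => [|i l IH] //= /andP[hi hl].
rewrite /pl /= -/(pl l) inE !mem_pl /Uv /Wv eVs /= (negbTE hi) IH //.
Qed.

Definition tour : seq V :=
  map inl (enum 'I_m.+2) ++ Wv ks :: Uv ks :: pl [seq i <- enum 'I_N | i != ks].

Lemma tour_perm : perm_eq tour (enum V).
Proof.
apply: uniq_perm; last 1 first.
- move=> v; rewrite mem_enum /tour mem_cat !inE mem_pl.
  case: v => [k|[k|k]] /=.
  + by rewrite (map_f inl (mem_enum _ k)).
  + by rewrite /Uv /Wv !eVs mem_filter mem_enum andbT; case: (k == ks); rewrite ?orbT.
  + by rewrite /Uv /Wv !eVs mem_filter mem_enum andbT; case: (k == ks); rewrite ?orbT.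
2: exact: enum_uniq.
rewrite /tour cat_uniq (map_inj_uniq (@inl_inj _ _)) ?enum_uniq // has_sym.
apply/andP; split=> //; apply/andP; split.
  apply/hasPn => z /mapP[k _ ->].
  by rewrite !inE mem_pl /Wv /Uv !eVs.
rewrite /= !inE /Uv /Wv !mem_pl /= !mem_filter eqxx ?eVs /=.
by apply: pl_uniq; rewrite filter_uniq // enum_uniq.
Qed.

Lemma iota_path k l : path (fun a b => a.+1 == b) k (iota k.+1 l).
Proof. by elim: l k => //= l IH k; rewrite eqxx IH. Qed.
Lemma last_iota k l : last k (iota k.+1 l) = k + l.
Proof. by elim: l k => [|l IH] k /=; [rewrite addn0 | rewrite IH addnS]. Qed.

Lemma tour_path : x ks -> exists s, tour = v0 :: s /\ path Rg v0 (rcons s v0).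
Proof.
move=> hx; set rest := map (lift ord0) (enum 'I_m.+1).
have hrest : map val rest = iota 1 m.+1.
  by have := val_enum_ord m.+2; rewrite enum_ordSl /= => -[].
exists (map inl rest ++ Wv ks :: Uv ks :: pl [seq i <- enum 'I_N | i != ks]).
split; first by rewrite /tour enum_ordSl.
rewrite rcons_cat cat_path; apply/andP; split.
  rewrite /v0 path_map.
  have hord : path (fun i j : 'I_m.+2 => i.+1 == j) ord0 rest.
    by have := iota_path 0 m.+1; rewrite -hrest (@path_map _ _ val _ ord0).
  apply: sub_path hord => i j hij; rewrite /Rg /=.
  by apply: dedge; rewrite /gadget_edge /= hij.
have hlo : val (last ord0 rest) = m.+1.
  by rewrite -last_map hrest /= last_iota.
have he : e (inl (last ord0 rest)) (Wv ks).
  by rewrite /gadget_edge /= /Wv /= hlo !eqxx ?orbT.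
rewrite /v0 last_map /= /Rg /= (dedge he) (dedge (e_UW' ks)) /=.
apply: ppath => //; apply/allP => i; rewrite mem_filter; by case/andP.
Qed.

Lemma upper : x ks -> tsp_cost e <= m.+2 + 4 * N.
Proof.
move=> hx; rewrite /tsp_cost.
case: arg_minnP => // q _ hq.
have [p hp] := exists_perm_tour tour_perm.
apply: leq_trans (hq p isT) _; rewrite hp.
have [s [ht hpath]] := tour_path hx.
rewrite ht /tour_cost.
have -> : sumn (pairmap (gdist e) v0 (rcons s v0)) = Sm (gdist e) v0 (rcons s v0) by [].
apply: leq_trans (Sm_le_path (G := fun a _ => Gw a) hpath) _.
rewrite Sm_first belast_rcons -ht.
rewrite (perm_sumn (perm_map Gw tour_perm)) sumnE big_map big_enum /=.
rewrite !big_sumType /= !sum_nat_const !card_ord; lia.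
Qed.
End Gadget.

Theorem mainTheorem20 (N n : nat) (x : 'I_N -> bool) (ks : 'I_N) :
  1 <= N -> 2 * N + 2 <= n ->
  (x ks -> tsp_cost (gadget_edge (M := n - 2 * N) x ks) <= n + 2 * N) /\
  (~~ x ks -> 2 * n - N - 1 <= tsp_cost (gadget_edge (M := n - 2 * N) x ks)).
Proof.
move=> hN hn.
have [m hm] : exists m, n - 2 * N = m.+2 by exists (n - 2 * N - 2); lia.
have hn' : n = m.+2 + 2 * N by lia.
rewrite hm; split => hx.
  apply: leq_trans (upper m hx) _; lia.
rewrite /tsp_cost; apply: leq_trans (lower _ hx); lia.
Qed.
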